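(* Consider the slotted transmission system and transmission policy $P$ described in the context, with loss probability $p$ satisfying $0<p<1$, feedback delay $d\ge 0$ and threshold $\gamma\ge 0$. Suppose that the estimate $\hat{Q}^r_k$ satisfies $Q^r_k-\hat{Q}^r_k\le\delta$ for all $k=1,2,\dots$, for some $\delta\ge 0$. Then $Q^r_k$ converges almost surely to the interval $0\le Q^r_k\le \gamma+\delta+1$ as $k\to\infty$.
   Context: Time is slotted, slots $k=1,2,\dots$; each slot carries at most one packet transmission over a lossy path. Information packets arrive at the transmitter according to $A_k\in\{0,1\}$ and are held in a transmitter queue $Q^t_{k+1}=[Q^t_k+A_k-S_k]^+$, $Q^t_1=0$, where $[x]^+=\max\{x,0\}$. In slot $k$, $S_k\in\{0,1\}$ indicates that an information packet is sent and $C_k\in\{0,1\}$ indicates that a coded packet is sent ($S_k+C_k\le 1$). Erasures: $X_k=1$ if the packet sent in slot $k$ is erased and $0$ otherwise; $\{X_k\}$ is i.i.d. with $\Pr(X_k=1)=p$, independent of the transmitter's decisions up to slot $k$. The virtual receiver queue evolves as $Q^r_{k+1}=[Q^r_k+S_kX_k-C_k(1-X_k)]^+$ (non-negative integer valued). Feedback reaches the transmitter with delay $d$ slots, so in slot $k$ the transmitter knows $Q^r_{k-d}$ (quantities with non-positive indices are given initial values). The estimator is $\hat{Q}^r_k=Q^r_{k-d}+\sum_{j=k-d}^{k-1}(S_jp-C_j(1-p))$. Transmission policy $P$ with parameter $\gamma\ge 0$: $C_k\in\arg\min_{C\in\{0,1\}}(-\hat{Q}^r_k+\gamma)C$ and $S_k=\min\{Q^t_k+A_k,\,1-C_k\}$.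 *)

(* Defs.v *)
From HB Require Import structures.
From mathcomp Require Import all_boot all_order all_algebra.
From mathcomp Require Import all_classical all_reals all_analysis.
Set Implicit Arguments. Unset Strict Implicit. Unset Printing Implicit Defensive.
Import Order.TTheory GRing.Theory Num.Theory.
Local Open Scope classical_set_scope.
Local Open Scope ring_scope.

(* Time slots are indexed by integers k : int; the dynamics are imposed for
   k >= 1, quantities with non-positive indices are arbitrary initial values.
   Binary quantities (A, S, C, X) are booleans (true = 1). *)

Definition Qhat (R : realType) (p : R) (d : nat) (Qr : int -> nat)
    (S C : int -> bool) (k : int) : R :=
  (Qr (k - d%:Z))%:R +
  \sum_(i < d) ((S (k - d%:Z + (i : nat)%:Z))%:R * p
                - (C (k - d%:Z + (i : nat)%:Z))%:R * (1 - p)).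

Definition policy_path (R : realType) (p gamma : R) (d : nat)
    (A S C X : int -> bool) (Qt Qr : int -> nat) : Prop :=
  [/\ Qt 1 = 0%N,
      (forall k : int, 1 <= k ->
         (Qt (k + 1))%:Z
         = Num.max 0 ((Qt k)%:Z + (A k : nat)%:Z - (S k : nat)%:Z)),
      (forall k : int, 1 <= k ->
         (Qr (k + 1))%:Z
         = Num.max 0 ((Qr k)%:Z + (S k : nat)%:Z * (X k : nat)%:Z
                      - (C k : nat)%:Z * (1 - (X k : nat)%:Z))),
      (forall k : int, 1 <= k -> forall c : bool,
         (gamma - Qhat p d Qr S C k) * (C k : nat)%:R
         <= (gamma - Qhat p d Qr S C k) * (c : nat)%:R) &
      (forall k : int, 1 <= k ->
         (S k : nat) = minn (Qt k + A k) (1 - C k))].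

(* {X_k}_{k>=1} i.i.d. with Pr(X_k = 1) = p : joint law of (X_1,...,X_n). *)
Definition iid_erasures (R : realType) (dT : measure_display)
    (T : measurableType dT) (P : probability T R) (X : int -> T -> bool)
    (p : R) : Prop :=
  (forall k : int, 1 <= k -> measurable [set w | X k w]) /\
  forall (n : nat) (b : 'I_n -> bool),
    P [set w | forall i : 'I_n, X (i.+1)%:Z w = b i]
    = (\prod_(i < n) (if b i then p else 1 - p))%:E.

Definition erasure_indep_decisions (R : realType) (dT : measure_display)
    (T : measurableType dT) (P : probability T R) (X S C : int -> T -> bool)
    : Prop :=
  (forall k : int, 1 <= k ->
     measurable [set w | S k w] /\ measurable [set w | C k w]) /\
  forall (k : nat), (1 <= k)%N -> forall (s c : 'I_k -> bool),
    let D := [set w | forall i : 'I_k,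
                 S (i.+1)%:Z w = s i /\ C (i.+1)%:Z w = c i] in
    P ([set w | X k%:Z w] `&` D) = (P [set w | X k%:Z w] * P D)%E.

(* Main.v *)
Require Import Defs.
From HB Require Import structures.
From mathcomp Require Import all_boot all_order all_algebra.
From mathcomp Require Import all_classical all_reals all_analysis.
From mathcomp Require Import zify lra.
Import Order.TTheory GRing.Theory Num.Theory.
Local Open Scope classical_set_scope.
Local Open Scope ring_scope.

Section Det.
Variables (R : realType) (p gamma delta : R) (d : nat).
Variables (A S C X : int -> bool) (Qt Qr : int -> nat).
Hypothesis hg : 0 <= gamma.
Hypothesis hdl : 0 <= delta.
Hypothesis hpath : policy_path p gamma d A S C X Qt Qr.
Hypothesis hbound : forall k : int, 1 <= k ->
  (Qr k)%:R - Qhat p d Qr S C k <= delta.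

Lemma maxE0 (a b : int) : a = Num.max 0 b -> (0 <= b -> a = b) /\ (b <= 0 -> a = 0).
Proof. move=> ->; split=> h; [exact/max_idPr | exact/max_idPl]. Qed.

Lemma step1 (k : int) : 1 <= k -> (Qr (k + 1) <= (Qr k).+1)%N.
Proof.
case: hpath => _ _ hQr _ _ hk.
have := hQr k hk; case: (S k); case: (X k); case: (C k) => /= /maxE0 H; lia.
Qed.

Lemma step2 (k : int) : 1 <= k -> gamma + delta < (Qr k)%:R ->
  (Qr (k + 1) <= Qr k)%N /\ (X k = false -> (Qr (k + 1)).+1 = Qr k).
Proof.
case: hpath => _ _ hQr hC hS hk hlt.
have hg' := hg; have hdl' := hdl.
have hQ := hbound k hk.
have hneg : gamma - Qhat p d Qr S C k < 0 by lra.
have Ck : C k = true.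
  have := hC k hk true; case: (C k) => //=.
  by rewrite mulr0 mulr1 => h; move: hneg; rewrite ltNge h.
have Sk : S k = false.
  have := hS k hk; rewrite Ck /= minn0; by case: (S k).
have pos : (0 < Qr k)%N.
  rewrite lt0n; apply/negP => /eqP h; move: hlt; rewrite h /=; lra.
have := hQr k hk; rewrite Ck Sk; case: (X k) => /= /maxE0 H; split => //; lia.
Qed.

Let q (n : nat) := Qr (n.+1)%:Z.

Lemma qstep1 n : (q n.+1 <= (q n).+1)%N.
Proof. have := @step1 (n.+1)%:Z; rewrite /q (_ : (n.+1)%:Z + 1 = (n.+2)%:Z); last lia.
  apply; lia. Qed.

Lemma qstep2 n : gamma + delta < (q n)%:R ->
  (q n.+1 <= q n)%N /\ (X (n.+1)%:Z = false -> (q n.+1).+1 = q n).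
Proof. have := @step2 (n.+1)%:Z; rewrite /q (_ : (n.+1)%:Z + 1 = (n.+2)%:Z); last lia.
  apply; lia. Qed.

Lemma det :
  (forall N : nat, exists n : nat, (N <= n)%N /\ X (n.+1)%:Z = false) ->
  exists K : int, forall k : int, K <= k ->
     (0 <= (Qr k)%:R :> R) /\ (Qr k)%:R <= gamma + delta + 1.
Proof.
move=> Hinf.
have hg' := hg; have hdl' := hdl.
have inv : forall n, (q n)%:R <= gamma + delta + 1 :> R ->
                    (q n.+1)%:R <= gamma + delta + 1 :> R.
  move=> n hn; have [hlt|hle] := ltrP (gamma + delta) (q n)%:R.
    have [h _] := qstep2 _ hlt.
    apply: le_trans hn; by rewrite ler_nat.
  apply: le_trans (_ : (q n)%:R + 1 <= _); last by lra.
  have := qstep1 n; rewrite -(ler_nat R) -natr1 //.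
case: (pselect (exists n, (q n)%:R <= gamma + delta + 1 :> R)) => [[n hn]|hno].
  have all : forall m, (n <= m)%N -> (q m)%:R <= gamma + delta + 1 :> R.
    elim=> [|m IH]; first by rewrite leqn0 => /eqP e; rewrite -e.
    rewrite leq_eqVlt => /orP [/eqP <- //|]; rewrite ltnS => /IH; exact: inv.
  exists (n.+1)%:Z => k hk; split; first by rewrite ler0n.
  have -> : k = ((`|k|%N.-1).+1)%:Z by lia.
  apply: all; lia.
exfalso.
have big : forall n, gamma + delta < (q n)%:R.
  move=> n; rewrite ltNge; apply/negP => h; apply: hno; exists n.
  lra.
have mono : forall a b, (a <= b)%N -> (q b <= q a)%N.
  move=> a b /subnK <-; elim: (b - a)%N => [|m IH] //=.
  rewrite addSn; apply: leq_trans IH; exact: (qstep2 _ (big _)).1.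
have claim : forall m, exists n, (q n + m <= q 0)%N.
  elim=> [|m [n hn]]; first by exists 0%N; rewrite addn0.
  have [j [hj hX]] := Hinf n.
  exists j.+1; have := (qstep2 _ (big j)).2 hX; have := mono _ _ hj; lia.
have [n hn] := claim (q 0).+1; lia.
Qed.
End Det.

Section Prob.
Context (R : realType) (dT : measure_display) (T : measurableType dT)
  (P : probability T R) (p : R) (X : int -> T -> bool).
Hypothesis hX : iid_erasures P X p.

Definition wt (b : bool) : R := if b then p else 1 - p.

Lemma mconst (b : bool) : measurable [set _ : T | b].
Proof.
case: b.
  by rewrite (_ : [set _ | true] = setT) //; apply/seteqP; split.
by rewrite (_ : [set _ | false] = set0) //; apply/seteqP; split.
Qed.

Lemma measb (k : int) (g : bool -> bool) : 1 <= k ->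
  measurable [set w | g (X k w)].
Proof.
move=> hk; have mX := hX.1 k hk.
rewrite (_ : [set w | g (X k w)] = ([set w | X k w] `&` [set _ | g true])
   `|` (~` [set w | X k w] `&` [set _ | g false])).
  by apply: measurableU; apply: measurableI => //;
    [exact: mconst | exact: measurableC | exact: mconst].
apply/seteqP; split => w /=; case: (X k w) => /=.
- by move=> h; left.
- by move=> h; right.
- by case=> [[]|[]].
- by case=> [[]|[]].
Qed.

Lemma cyl_meas n (F : 'I_n -> bool -> bool) :
  measurable [set w | forall i : 'I_n, F i (X (i.+1)%:Z w)].
Proof.
rewrite (_ : [set w | _] = \bigcap_(i in [set: 'I_n]) [set w | F i (X (i.+1)%:Z w)]).
  apply: fin_bigcap_measurable; first exact: finite_finset.
  by move=> i _; apply: measb; lia.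
by apply/seteqP; split => w /=; [move=> h i _; exact: h | move=> h i; exact: h].
Qed.

Lemma cyl_prob n (F : 'I_n -> bool -> bool) :
  P [set w | forall i : 'I_n, F i (X (i.+1)%:Z w)]
  = (\prod_(i < n) \sum_(b : bool) (if F i b then wt b else 0))%:E.
Proof.
pose G := fun f : {ffun 'I_n -> bool} =>
  if [forall i, F i (f i)] then [set w | forall i : 'I_n, X (i.+1)%:Z w = f i]
  else set0.
have -> : [set w | forall i : 'I_n, F i (X (i.+1)%:Z w)]
          = \bigcup_(f in [set: {ffun 'I_n -> bool}]) G f.
  apply/seteqP; split => w /=.
  - move=> hw; exists [ffun i : 'I_n => X (i.+1)%:Z w] => //; rewrite /G.
    have -> : [forall i, F i ([ffun i : 'I_n => X (i.+1)%:Z w] i)].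
      by apply/forallP => i; rewrite ffunE.
    by move=> i; rewrite ffunE.
  - move=> [f _]; rewrite /G; case: ifP => // /forallP hf hw i.
    by rewrite hw.
have mG : forall f, [set: {ffun 'I_n -> bool}] f -> measurable (G f).
  move=> f _; rewrite /G; case: ifP => _ //.
  rewrite (_ : [set w | forall i : 'I_n, X (i.+1)%:Z w = f i]
     = [set w | forall i : 'I_n, (fun i b => b == f i) i (X (i.+1)%:Z w)]).
    exact: (cyl_meas n (fun i b => b == f i)).
  by apply/seteqP; split => w /= h i; apply/eqP; exact: h.
rewrite measure_fin_bigcup //; last first.
  move=> f g _ _ [w []]; rewrite /G; case: ifP => _ // h1; case: ifP => _ // h2.
  by apply/ffunP => i; rewrite -h1 -h2.
  exact: finite_finset.
rewrite (@fsbigE _ _ _ _ setT (index_enum {ffun 'I_n -> bool})) //; last first.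
- by move=> i _; rewrite mem_index_enum.
- exact: index_enum_uniq.
rewrite bigA_distr_bigA -sumEFin big_mkcond /=; apply: eq_bigr => f _.
rewrite in_setT /G; case: ifP => hf.
  rewrite hX.2; congr EFin; apply: eq_bigr => i _.
  by rewrite (forallP hf i).
rewrite measure0; move/negbT/forallPn: hf => [i hi].
by rewrite (bigD1 i) //= (negbTE hi) mul0r.
Qed.
Lemma prodpow N n :
  \prod_(i < n) \sum_(b : bool) (if (N <= i)%N ==> b then wt b else 0)
  = p ^+ (n - N).
Proof.
elim: n => [|n IH]; first by rewrite big_ord0 sub0n expr0.
rewrite big_ord_recr /= IH big_bool /= /wt; case: (leqP N n) => h /=.
  by rewrite addr0 subSn // exprSr.
have e1 : (n.+1 - N = 0)%N by lia.
have e2 : (n - N = 0)%N by lia.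
by rewrite e1 e2 addrC subrK mulr1.
Qed.

Definition Bset N := \bigcap_(n in [set: nat])
  [set w | forall i : 'I_n, (N <= i)%N ==> X (i.+1)%:Z w].

Lemma Bmeas N : measurable (Bset N).
Proof.
apply: bigcap_measurableType => n _.
exact: (cyl_meas n (fun i b => (N <= i)%N ==> b)).
Qed.

Lemma Bnull N : 0 < p < 1 -> P (Bset N) = 0.
Proof.
move=> /andP[p0 p1].
have le : forall m : nat, (P (Bset N) <= (p ^+ m)%:E)%E.
  move=> m; have := cyl_prob (N + m) (fun i b => (N <= i)%N ==> b).
  rewrite prodpow addKn => <-.
  apply: le_measure; rewrite ?inE //; first exact: Bmeas.
    exact: (cyl_meas _ (fun i b => (N <= i)%N ==> b)).
  by move=> w hw; exact: (hw (N + m)%N I).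
have ge : (0 <= P (Bset N))%E by apply: measure_ge0.
case E: (P (Bset N)) => [r| |] in le ge *.
- have r0 : 0 <= r by move: ge; rewrite lee_fin.
  congr EFin; apply/eqP; rewrite eq_le r0 andbT leNgt; apply/negP => rpos.
  have hp : `|p| < 1 by rewrite ger0_norm ?ltW.
  have [M _ hM] := cvgr0_norm_lt _ (cvg_expr hp) _ rpos.
  have := hM M (leqnn M); rewrite ger0_norm ?exprn_ge0 ?ltW // => hlt.
  have := le M; rewrite lee_fin => hle.
  by move: (lt_le_trans hlt hle); rewrite ltxx.
- by move: (le 0%N); rewrite leye_eq.
- by move: ge; rewrite leeNy_eq.
Qed.
End Prob.

Theorem theorem1 (R : realType) (dT : measure_display) (T : measurableType dT)
    (P : probability T R) (p gamma delta : R) (d : nat)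
    (A S C X : int -> T -> bool) (Qt Qr : int -> T -> nat) :
  0 < p < 1 -> 0 <= gamma -> 0 <= delta ->
  iid_erasures P X p ->
  erasure_indep_decisions P X S C ->
  (forall w, policy_path p gamma d (A ^~ w) (S ^~ w) (C ^~ w) (X ^~ w)
                         (Qt ^~ w) (Qr ^~ w)) ->
  (forall w (k : int), 1 <= k ->
     (Qr k w)%:R - Qhat p d (Qr ^~ w) (S ^~ w) (C ^~ w) k <= delta) ->
  {ae P, forall w, exists K : int, forall k : int, K <= k ->
     (0 <= (Qr k w)%:R :> R) /\ (Qr k w)%:R <= gamma + delta + 1}.
Proof.
move=> hp hg hd hX hind hpath hbnd.
have hneg : P.-negligible (\bigcup_N Bset dT T X N).
  apply: negligible_bigcup => N; apply/negligibleP; first exact: (@Bmeas R dT T P p X hX N).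
  exact: (@Bnull R dT T P p X hX N hp).
apply: (negligibleS _ hneg) => w /= hw.
case: (pselect (forall N : nat, exists n : nat, (N <= n)%N /\ X (n.+1)%:Z w = false)) => H.
  exfalso; apply: hw.
  exact: (@det R p gamma delta d (A^~w) (S^~w) (C^~w) (X^~w) (Qt^~w) (Qr^~w)
            hg hd (hpath w) (hbnd w) H).
move/existsNP: H => [N hN].
exists N => // n _ i; apply/implyP => hi.
case E: (X (i.+1)%:Z w) => //; exfalso; apply: hN; exists i; split => //.
Qed.
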